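(* For every formula $A$ of $\mathbf{L_1}$, if $\vdash_T A$ then $\vdash_H A$.
   Context: Formulas of $\mathbf{L_1}$: built from atomic formulas $\epsilon ab$ ($a,b$ name variables, possibly equal) with primitive connectives $\vee,\sim$; $\wedge,\supset,\equiv$ defined as usual. $\vdash_H A$: $A$ belongs to the smallest set of formulas containing all instances of classical propositional tautologies and all formulas $\epsilon ab\supset\epsilon aa$, $(\epsilon ab\wedge\epsilon bc)\supset\epsilon ac$, $(\epsilon ab\wedge\epsilon bb)\supset\epsilon ba$, closed under modus ponens. Positive/negative parts (occurrences): $A$ is a positive part of $A$; if $B\vee C$ is a positive part then $B,C$ are positive parts; if $\sim B$ is a positive part then $B$ is a negative part; if $\sim B$ is a negative part then $B$ is a positive part. $F[B_+]$ ($G[B_-]$) denotes a formula with a specified occurrence of $B$ as positive (negative) part; $F[B_+,C_-]$ etc. denote specified non-overlapping occurrences. Tableaux: reduction rules ($\vee_-$) $G[B\vee C_-]$ $\mapsto$ two branches $G[B\vee C_-]\vee\sim B$, $G[B\vee C_-]\vee\sim C$; ($\epsilon_1$) $G[\epsilon ab_-]\mapsto G[\epsilon ab_-]\vee\sim\epsilon aa$; ($\epsilon_2$) $G[\epsilon ab_-,\epsilon bc_-]\mapsto G[\epsilon ab_-,\epsilon bc_-]\vee\sim\epsilon ac$; ($\epsilon_{3b}$) $G[\epsilon ab_-,\epsilon bb_-]\mapsto G[\epsilon ab_-,\epsilon bb_-]\vee\sim\epsilon ba$. A tableau for $A$ is a finite tree with root $A$ whose non-leaf nodes have as children the result of applying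 one rule. A branch is closed if its last formula has the form $F[B_+,B_-]$; a tableau is closed if all its branches are closed. $\vdash_T A$: $A$ has a closed tableau. *)

(* Defs.v *)
From Stdlib Require Import Bool.

Inductive form : Type :=
| Eps : nat -> nat -> form
| Or  : form -> form -> form
| Not : form -> form.

Definition Imp (A B : form) : form := Or (Not A) B.
Definition And (A B : form) : form := Not (Or (Not A) (Not B)).

Inductive pform : Type :=
| PVar : nat -> pform
| POr  : pform -> pform -> pform
| PNot : pform -> pform.

Fixpoint peval (v : nat -> bool) (P : pform) : bool :=
  match P with
  | PVar n => v n
  | POr P Q => peval v P || peval v Q
  | PNot P => negb (peval v P)
  end.

Definition tautology (P : pform) : Prop := forall v, peval v P = true.

Fixpoint psubst (s : nat -> form) (P : pform) : form :=
  match P with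
  | PVar n => s n
  | POr P Q => Or (psubst s P) (psubst s Q)
  | PNot P => Not (psubst s P)
  end.

Definition taut_instance (A : form) : Prop :=
  exists (P : pform) (s : nat -> form), tautology P /\ A = psubst s P.

Inductive Hprov : form -> Prop :=
| H_taut : forall A, taut_instance A -> Hprov A
| H_ax1 : forall a b, Hprov (Imp (Eps a b) (Eps a a))
| H_ax2 : forall a b c, Hprov (Imp (And (Eps a b) (Eps b c)) (Eps a c))
| H_ax3 : forall a b, Hprov (Imp (And (Eps a b) (Eps b b)) (Eps b a))
| H_mp : forall A B, Hprov A -> Hprov (Imp A B) -> Hprov B.

(** One-hole contexts = specified occurrences of a subformula. *)
Inductive ctx : Type :=
| Hole : ctx
| COrL : ctx -> form -> ctx
| COrR : form -> ctx -> ctx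
| CNot : ctx -> ctx.

Fixpoint plug (c : ctx) (X : form) : form :=
  match c with
  | Hole => X
  | COrL c C => Or (plug c X) C
  | COrR C c => Or C (plug c X)
  | CNot c => Not (plug c X)
  end.

(** [rel c q p]: when the top of the context is a part of polarity [q]
    (true = positive, false = negative), the hole is a part of polarity [p].
    Following the definition: disjuncts of a POSITIVE disjunction are
    positive parts; the argument of a negation is a part of opposite
    polarity; disjuncts of a negative disjunction are not parts. *)
Inductive rel : ctx -> bool -> bool -> Prop :=
| rel_hole : forall q, rel Hole q q
| rel_orl : forall c C p, rel c true p -> rel (COrL c C) true p
| rel_orr : forall C c p, rel c true p -> rel (COrR C c) true p
| rel_not : forall c q p, rel c (negb q) p -> rel (CNot c) q p.

(** [pos_occ c] / [neg_occ c]: the hole of [c] is a positive / negative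
    part of the whole formula (the whole formula being a positive part). *)
Definition pos_occ (c : ctx) : Prop := rel c true true.
Definition neg_occ (c : ctx) : Prop := rel c true false.

(** Two-hole contexts with non-overlapping holes: they diverge at a
    disjunction. [plug2 d X Y] puts X in hole 1 and Y in hole 2. *)
Inductive ctx2 : Type :=
| Split12 : ctx -> ctx -> ctx2
| Split21 : ctx -> ctx -> ctx2
| C2OrL : ctx2 -> form -> ctx2
| C2OrR : form -> ctx2 -> ctx2
| C2Not : ctx2 -> ctx2.

Fixpoint plug2 (d : ctx2) (X Y : form) : form :=
  match d with
  | Split12 c1 c2 => Or (plug c1 X) (plug c2 Y)
  | Split21 c1 c2 => Or (plug c2 Y) (plug c1 X)
  | C2OrL d C => Or (plug2 d X Y) C
  | C2OrR C d => Or C (plug2 d X Y)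
  | C2Not d => Not (plug2 d X Y)
  end.

Inductive rel2 : ctx2 -> bool -> bool -> bool -> Prop :=
| rel2_12 : forall c1 c2 p1 p2,
    rel c1 true p1 -> rel c2 true p2 -> rel2 (Split12 c1 c2) true p1 p2
| rel2_21 : forall c1 c2 p1 p2,
    rel c1 true p1 -> rel c2 true p2 -> rel2 (Split21 c1 c2) true p1 p2
| rel2_orl : forall d C p1 p2, rel2 d true p1 p2 -> rel2 (C2OrL d C) true p1 p2
| rel2_orr : forall C d p1 p2, rel2 d true p1 p2 -> rel2 (C2OrR C d) true p1 p2
| rel2_not : forall d q p1 p2, rel2 d (negb q) p1 p2 -> rel2 (C2Not d) q p1 p2.

Definition rule_or (G G1 G2 : form) : Prop :=
  exists c B C, neg_occ c /\ G = plug c (Or B C) /\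
                G1 = Or G (Not B) /\ G2 = Or G (Not C).

Definition rule_eps (G G' : form) : Prop :=
  (exists c a b, neg_occ c /\ G = plug c (Eps a b) /\
                 G' = Or G (Not (Eps a a)))
  \/ (exists d a b c, rel2 d true false false /\ G = plug2 d (Eps a b) (Eps b c) /\
                 G' = Or G (Not (Eps a c)))
  \/ (exists d a b, rel2 d true false false /\ G = plug2 d (Eps a b) (Eps b b) /\
                 G' = Or G (Not (Eps b a))).

Definition closed_form (F : form) : Prop :=
  exists d B, rel2 d true true false /\ F = plug2 d B B.

Inductive tree : Type :=
| Leaf : form -> tree
| Node1 : form -> tree -> tree
| Node2 : form -> tree -> tree -> tree.

Definition root (t : tree) : form :=
  match t with Leaf f => f | Node1 f _ => f | Node2 f _ _ => f end.

Fixpoint is_tableau (t : tree) : Prop :=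
  match t with
  | Leaf _ => True
  | Node1 f t1 => rule_eps f (root t1) /\ is_tableau t1
  | Node2 f t1 t2 => rule_or f (root t1) (root t2) /\ is_tableau t1 /\ is_tableau t2
  end.

Fixpoint all_closed (t : tree) : Prop :=
  match t with
  | Leaf f => closed_form f
  | Node1 _ t1 => all_closed t1
  | Node2 _ t1 t2 => all_closed t1 /\ all_closed t2
  end.

Definition Tprov (A : form) : Prop :=
  exists t, root t = A /\ is_tableau t /\ all_closed t.

(* Main.v *)
Require Import Defs.
From Stdlib Require Import Bool Cantor.

Fixpoint feval (w : nat -> nat -> bool) (A : form) : bool :=
  match A with
  | Eps a b => w a b
  | Or A B => feval w A || feval w B
  | Not A => negb (feval w A)
  end.

Fixpoint toP (A : form) : pform :=
  match A with
  | Eps a b => PVar (to_nat (a, b))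
  | Or A B => POr (toP A) (toP B)
  | Not A => PNot (toP A)
  end.

Definition sdec (n : nat) : form := Eps (fst (of_nat n)) (snd (of_nat n)).

Lemma psubst_toP A : psubst sdec (toP A) = A.
Proof.
  induction A; cbn [psubst toP]; try congruence.
  unfold sdec; rewrite cancel_of_to; reflexivity.
Qed.

Lemma peval_toP v A : peval v (toP A) = feval (fun a b => v (to_nat (a, b))) A.
Proof. induction A; cbn [peval toP feval]; congruence. Qed.

Lemma valid_Hprov A : (forall w, feval w A = true) -> Hprov A.
Proof.
  intros H. apply H_taut. exists (toP A), sdec. split.
  - intros v. rewrite peval_toP. apply H.
  - symmetry; apply psubst_toP.
Qed.

Lemma conseq2 A B C : Hprov A -> Hprov B ->
  (forall w, feval w A = true -> feval w B = true -> feval w C = true) -> Hprov C.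
Proof.
  intros HA HB H.
  assert (Hi : Hprov (Imp A (Imp B C))).
  { apply valid_Hprov. intros w. simpl. specialize (H w).
    destruct (feval w A), (feval w B), (feval w C); simpl; auto. }
  eapply H_mp; [exact HB|]. eapply H_mp; [exact HA|exact Hi].
Qed.

Lemma rel_sem c q p w X : rel c q p -> feval w X = p -> feval w (plug c X) = q.
Proof.
  intros R; induction R; simpl; intros E; auto.
  - rewrite IHR; auto.
  - rewrite IHR; auto; apply orb_true_r.
  - rewrite IHR; auto; apply negb_involutive.
Qed.

Lemma rel2_sem1 d q p1 p2 w X Y : rel2 d q p1 p2 -> feval w X = p1 -> feval w (plug2 d X Y) = q.
Proof.
  intros R; induction R; simpl; intros E; auto.
  - rewrite (rel_sem _ _ _ _ _ H E); auto.
  - rewrite (rel_sem _ _ _ _ _ H E); auto; apply orb_true_r.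
  - rewrite IHR; auto.
  - rewrite IHR; auto; apply orb_true_r.
  - rewrite IHR; auto; apply negb_involutive.
Qed.

Lemma rel2_sem2 d q p1 p2 w X Y : rel2 d q p1 p2 -> feval w Y = p2 -> feval w (plug2 d X Y) = q.
Proof.
  intros R; induction R; simpl; intros E; auto.
  - rewrite (rel_sem _ _ _ _ _ H0 E); auto; apply orb_true_r.
  - rewrite (rel_sem _ _ _ _ _ H0 E); auto.
  - rewrite IHR; auto.
  - rewrite IHR; auto; apply orb_true_r.
  - rewrite IHR; auto; apply negb_involutive.
Qed.

Lemma closed_Hprov F : closed_form F -> Hprov F.
Proof.
  intros [d [B [R ->]]]. apply valid_Hprov. intros w.
  destruct (feval w B) eqn:E.
  - eapply rel2_sem1; eauto.
  - eapply rel2_sem2; eauto.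
Qed.

Lemma rule_or_sound G G1 G2 : rule_or G G1 G2 -> Hprov G1 -> Hprov G2 -> Hprov G.
Proof.
  intros [c [B [C [N [-> [-> ->]]]]]] H1 H2.
  eapply conseq2; [exact H1|exact H2|]. intros w E1 E2. simpl in *.
  destruct (feval w (plug c (Or B C))) eqn:EG; auto.
  simpl in E1, E2. apply negb_true_iff in E1, E2.
  rewrite <- EG. apply (rel_sem _ _ _ _ _ N). simpl. rewrite E1, E2; reflexivity.
Qed.

Lemma rule_eps_sound G G' : rule_eps G G' -> Hprov G' -> Hprov G.
Proof.
  intros [[c [a [b [N [-> ->]]]]] | [[d [a [b [c [R [-> ->]]]]]] | [d [a [b [R [-> ->]]]]]]] H.
  - eapply conseq2; [exact H|apply (H_ax1 a b)|]. intros w E1 E2; unfold Imp, And in *; simpl in *.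
    destruct (feval w (plug c (Eps a b))) eqn:EG; auto.
    destruct (w a b) eqn:Eab.
    + simpl in *. rewrite E2 in E1; discriminate.
    + rewrite <- EG. apply (rel_sem _ _ _ _ _ N). exact Eab.
  - eapply conseq2; [exact H|apply (H_ax2 a b c)|]. intros w E1 E2; unfold Imp, And in *; simpl in *.
    destruct (feval w (plug2 d (Eps a b) (Eps b c))) eqn:EG; auto.
    destruct (w a b) eqn:Eab.
    + destruct (w b c) eqn:Ebc.
      * simpl in *. rewrite E2 in E1; discriminate.
      * rewrite <- EG. apply (rel2_sem2 _ _ _ _ _ _ _ R). exact Ebc.
    + rewrite <- EG. apply (rel2_sem1 _ _ _ _ _ _ _ R). exact Eab.
  - eapply conseq2; [exact H|apply (H_ax3 a b)|]. intros w E1 E2; unfold Imp, And in *; simpl in *.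
    destruct (feval w (plug2 d (Eps a b) (Eps b b))) eqn:EG; auto.
    destruct (w a b) eqn:Eab.
    + destruct (w b b) eqn:Ebb.
      * simpl in *. rewrite E2 in E1; discriminate.
      * rewrite <- EG. apply (rel2_sem2 _ _ _ _ _ _ _ R). exact Ebb.
    + rewrite <- EG. apply (rel2_sem1 _ _ _ _ _ _ _ R). exact Eab.
Qed.

Lemma tree_sound t : is_tableau t -> all_closed t -> Hprov (root t).
Proof.
  induction t; simpl.
  - intros _ H; apply closed_Hprov; exact H.
  - intros [R T] C. eapply rule_eps_sound; eauto.
  - intros [R [T1 T2]] [C1 C2]. eapply rule_or_sound; eauto.
Qed.

Theorem theorem2p2 : forall A : form, Tprov A -> Hprov A.
Proof.
  intros A [t [<- [T C]]]. apply tree_sound; auto.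
Qed.
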